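(* Let $p$ be a prime with $p\equiv 1 \pmod 4$, let $G=\mathbb{Z}_{2p}$ and $H=\{0,p\}\le G$. Define $A_0=\{s,\ s+p\in\mathbb{Z}_{2p}: s\in\{1,\dots,p-1\} \text{ is a quadratic residue modulo } p\}$ and $A_1=\{t,\ t+p\in\mathbb{Z}_{2p}: t\in\{1,\dots,p-1\} \text{ is a quadratic non-residue modulo } p\}$ (so $|A_0|=|A_1|=p-1$ and $\mathbb{Z}_{2p}\setminus(A_0\cup A_1)=H$). Then (i) $\Delta(A_0)=\frac{p-5}{2}A_0\cup\frac{p-1}{2}A_1\cup(p-1)\{p\}$; (ii) $\Delta(A_1)=\frac{p-5}{2}A_1\cup\frac{p-1}{2}A_0\cup(p-1)\{p\}$; (iii) $\{A_0,A_1\}$ is a $(2p,2,p-1,p-3,2p-2)$-DPDF and a $(2p,2,p-1,p-1,0)$-EPDF in $\mathbb{Z}_{2p}$.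
   Context: For $D\subseteq \mathbb{Z}_v$, $\Delta(D)$ is the multiset $\{x-y:x,y\in D,x\ne y\}$, and $\Delta(D_1,D_2)$ is the multiset $\{x-y:x\in D_1,y\in D_2\}$. For a nonnegative integer $\lambda$ and a set $X$, $\lambda X$ denotes the multiset consisting of $\lambda$ copies of each element of $X$, and $\cup$ between multisets denotes multiset union. For a family $A=\{A_1,\dots,A_s\}$ of pairwise disjoint subsets, ${\rm Int}(A)=\bigcup_i\Delta(A_i)$ and ${\rm Ext}(A)=\bigcup_{i\ne j}\Delta(A_i,A_j)$. In a group $G$ of order $v$ with identity $0$, a $(v,s,k,\lambda,\mu)$-DPDF is a family of $s$ pairwise disjoint $k$-subsets of $G\setminus\{0\}$ with union $S$ such that ${\rm Int}(A)$ contains each element of $S$ exactly $\lambda$ times and each element of $G\setminus(S\cup\{0\})$ exactly $\mu$ times; a $(v,s,k,\lambda,\mu)$-EPDF is defined the same way using ${\rm Ext}(A)$. *)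

(* Defs.v *)
From HB Require Import structures.
From mathcomp Require Import all_boot all_order all_algebra.
Set Implicit Arguments. Unset Strict Implicit. Unset Printing Implicit Defensive.
Import GRing.Theory.
Local Open Scope ring_scope.

(* Multisets over a finite group are represented by sequences, compared
   with perm_eq (equality of multisets). *)
Section DF.
Variable G : finZmodType.

Definition Delta (D : {set G}) : seq G :=
  [seq x.1 - x.2 | x <- enum (setX D D) & x.1 != x.2].

Definition Delta2 (D1 D2 : {set G}) : seq G :=
  [seq x.1 - x.2 | x <- enum (setX D1 D2)].

Definition mscale (l : nat) (X : {set G}) : seq G :=
  flatten [seq nseq l x | x <- enum X].

Definition IntF (A : seq {set G}) : seq G := flatten [seq Delta Ai | Ai <- A].

Definition ExtF (A : seq {set G}) : seq G :=
  flatten [seq Delta2 (nth set0 A ij.1) (nth set0 A ij.2)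
          | ij <- [seq (i, j) | i <- iota 0 (size A), j <- iota 0 (size A)]
          & ij.1 != ij.2]%N.

Definition unionF (A : seq {set G}) : {set G} := \bigcup_(Ai <- A) Ai.

Definition pdf_family (v s k : nat) (A : seq {set G}) : Prop :=
  [/\ #|G| = v, size A = s,
      (forall i j, (i < s)%N -> (j < s)%N -> i <> j ->
         [disjoint nth set0 A i & nth set0 A j]),
      (forall i, (i < s)%N -> #|nth set0 A i| = k) &
      (forall i, (i < s)%N -> 0 \notin nth set0 A i)].

Definition df_counts (A : seq {set G}) (lam mu : nat) (M : seq G) : Prop :=
  forall x : G,
    (x \in unionF A -> count_mem x M = lam) /\
    (x \notin unionF A -> x != 0 -> count_mem x M = mu).

Definition is_DPDF (v s k lam mu : nat) (A : seq {set G}) : Prop :=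
  pdf_family v s k A /\ df_counts A lam mu (IntF A).

Definition is_EPDF (v s k lam mu : nat) (A : seq {set G}) : Prop :=
  pdf_family v s k A /\ df_counts A lam mu (ExtF A).
End DF.

Definition qres (p s : nat) : bool := [exists y : 'I_p, (y * y) %% p == s %% p]%N.

Definition A0 (p : nat) : {set 'Z_(2 * p)} :=
  [set x : 'Z_(2 * p) | [exists s : 'I_p,
     [&& (0 < s)%N, qres p s & (x == s%:R) || (x == (s + p)%:R)]]].

Definition A1 (p : nat) : {set 'Z_(2 * p)} :=
  [set x : 'Z_(2 * p) | [exists t : 'I_p,
     [&& (0 < t)%N, ~~ qres p t & (x == t%:R) || (x == (t + p)%:R)]]].

(* Main.v *)
Require Import Defs.
From mathcomp Require Import all_boot all_order all_algebra.
Import GRing.Theory.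
From mathcomp Require Import zify ring.

Section Fp.
Variable p : nat.
Hypothesis pr : prime p.
Hypothesis p4 : p %% 4 = 1.
Local Open Scope ring_scope.
Local Notation F := 'F_p.

Definition sqF (u : F) := [exists y : F, y * y == u].
Definition QF := [set u : F | (u != 0) && sqF u].
Definition NF := [set u : F | (u != 0) && ~~ sqF u].
Definition cnt (S T : {set F}) (d : F) : nat := (\sum_(u in S) nat_of_bool ((u - d)%R \in T))%N.

Lemma p_gt2 : (2 < p)%N.
Proof.
have p1 := prime_gt1 pr.
case: p p4 pr p1 => [|[|[|n]]] //=.
Qed.

Lemma two_neq0 : (2%:R : F) != 0.
Proof.
rewrite -(dvdn_pcharf (pchar_Fp pr)).
apply/negP => /dvdn_leq => /(_ isT). have := p_gt2. lia.
Qed.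

Lemma sqF_mul u v : sqF u -> sqF v -> sqF (u * v).
Proof.
move=> /existsP[a /eqP <-] /existsP[b /eqP <-]; apply/existsP; exists (a * b).
by rewrite mulrACA.
Qed.

Lemma sqF_inv u : sqF u -> sqF u^-1.
Proof.
move=> /existsP[a /eqP <-]; apply/existsP; exists a^-1; by rewrite invfM.
Qed.

Lemma QF_in u : (u \in QF) = (u != 0) && sqF u.
Proof. by rewrite inE. Qed.
Lemma NF_in u : (u \in NF) = (u != 0) && ~~ sqF u.
Proof. by rewrite inE. Qed.

Lemma card_nz : #|[set~ (0 : F)]| = (p - 1)%N.
Proof. by rewrite cardsC1 card_Fp // subn1. Qed.

Lemma sq_eq (y z : F) : (y * y == z * z) = (y == z) || (y == - z).
Proof.
have -> : (y * y == z * z) = ((y - z) * (y + z) == 0).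
  by rewrite -subr_eq0; apply/eqP/eqP => H; rewrite -H; ring.
by rewrite mulf_eq0 subr_eq0 addr_eq0.
Qed.

Lemma z_neq_oppz (z : F) : z != 0 -> z != - z.
Proof.
move=> nz; apply/negP => /eqP H.
have : 2%:R * z = 0 by rewrite mulr2n mulrDl mul1r {1}H addNr.
by move/eqP; rewrite mulf_eq0 (negbTE two_neq0) (negbTE nz).
Qed.

Lemma card_QF : (#|QF| * 2)%N = (p - 1)%N.
Proof.
rewrite -card_nz; symmetry; rewrite -sum1_card.
rewrite (partition_big (fun y => y * y) (mem QF)); last first.
  move=> y; rewrite !inE => nz; rewrite mulf_neq0 //=.
  by apply/existsP; exists y.
rewrite -sum_nat_const; apply: eq_bigr => u Hu; have : u \in QF by []; rewrite inE => /andP[nzu /existsP[z /eqP zu]].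
rewrite sum1dep_card.
have nz : z != 0 by apply: contraNneq nzu => z0; rewrite -zu z0 mul0r.
have -> : [set x | (x \in [set~ 0]) && (x * x == u)] = [set z; -z].
  apply/setP => y; rewrite !inE -zu sq_eq.
  case: (y =P 0) => [->|_] /=; last by [].
  by rewrite !(eq_sym 0) oppr_eq0 (negbTE nz).
by rewrite cards2 z_neq_oppz.
Qed.

Lemma card_NF : (#|NF| * 2)%N = (p - 1)%N.
Proof.
have : (#|QF| + #|NF|)%N = (p - 1)%N.
  rewrite -card_nz -(cardsID [set u : F | sqF u] [set~ 0]).
  have -> : QF = [set~ 0] :&: [set u : F | sqF u] by apply/setP => u; rewrite !inE.
  have -> : NF = [set~ 0] :\: [set u : F | sqF u] by apply/setP => u; rewrite !inE andbC.
  by [].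
have := card_QF. lia.
Qed.
Lemma mulQ_sq l u : l \in QF -> sqF (l * u) = sqF u.
Proof.
rewrite inE => /andP[nl sl]; apply/idP/idP; last exact: sqF_mul.
move=> H; have -> : u = l^-1 * (l * u) by rewrite mulrA mulVf ?mul1r.
by apply: sqF_mul => //; apply: sqF_inv.
Qed.

Lemma mulQ_Q l u : l \in QF -> (l * u \in QF) = (u \in QF).
Proof.
move=> Hl; have := Hl; rewrite !inE mulQ_sq // => /andP[nl _].
by rewrite mulf_eq0 (negbTE nl).
Qed.

Lemma mulQ_N l u : l \in QF -> (l * u \in NF) = (u \in NF).
Proof.
move=> Hl; have := Hl; rewrite !inE mulQ_sq // => /andP[nl _].
by rewrite mulf_eq0 (negbTE nl).
Qed.

Lemma mulN_QN l u : l \in NF -> u \in QF -> l * u \in NF.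
Proof.
rewrite !inE => /andP[nl sl] /andP[nu su]; rewrite mulf_neq0 //=.
apply/negP => H; move/negP: sl; apply.
have -> : l = (l * u) * u^-1 by rewrite -mulrA mulfV ?mulr1.
by apply: sqF_mul => //; apply: sqF_inv.
Qed.

Lemma QN_disj u : u \in QF -> u \in NF -> False.
Proof. by rewrite !inE => /andP[_ ->] /andP[]. Qed.

Lemma mulN_NQ l u : l \in NF -> u \in NF -> l * u \in QF.
Proof.
move=> Hl Hu.
have nl : l != 0 by move: Hl; rewrite inE => /andP[].
have nu : u != 0 by move: Hu; rewrite inE => /andP[].
have img : [set l * x | x in QF] = NF.
  apply/eqP; rewrite eqEcard; apply/andP; split.
    by apply/subsetP => y /imsetP[x xQ ->]; apply: mulN_QN.
  rewrite card_imset; last exact: mulfI.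
  by rewrite -(leq_pmul2r (isT : (0 < 2)%N)) card_QF card_NF.
rewrite inE mulf_neq0 //=; apply: contraT => ns.
have : l * u \in NF by rewrite inE mulf_neq0 //=. 
rewrite -img => /imsetP[x xQ /(mulfI nl) ux].
by case: (QN_disj _ _ Hu); rewrite ux.
Qed.

Lemma mulN_Q l u : l \in NF -> (l * u \in QF) = (u \in NF).
Proof.
move=> Hl; apply/idP/idP; last exact: mulN_NQ.
move=> H; have nu : u != 0.
  by apply: contraTneq H => ->; rewrite mulr0 inE eqxx.
case Hu: (u \in NF) => //.
have uQ : u \in QF by move: Hu; rewrite !inE nu /= => /negbFE.
by case: (QN_disj _ H (mulN_QN _ _ Hl uQ)).
Qed.

Lemma mulN_N l u : l \in NF -> (l * u \in NF) = (u \in QF).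
Proof.
move=> Hl; apply/idP/idP; last exact: mulN_QN.
move=> H; have nu : u != 0.
  by apply: contraTneq H => ->; rewrite mulr0 inE eqxx.
case Hu: (u \in QF) => //.
have uN : u \in NF by move: Hu; rewrite !inE nu /= => ->.
by case: (QN_disj _ (mulN_NQ _ _ Hl uN) H).
Qed.
Lemma cnt_all S T d : cnt S T d = (\sum_u nat_of_bool ((u \in S) && ((u - d)%R \in T)))%N.
Proof. by rewrite /cnt big_mkcond; apply: eq_bigr => u _; case: (u \in S). Qed.

Lemma cnt_sym (S T : {set F}) d : cnt S T d = cnt T S (- d).
Proof.
rewrite !cnt_all (reindex_inj (addIr d)); apply: eq_bigr => v _ /=.
by rewrite addrK opprK andbC.
Qed.

Lemma cnt_scale (S T S' T' : {set F}) (l d : F) : l != 0 ->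
  (forall v, (l * v \in S) = (v \in S')) -> (forall v, (l * v \in T) = (v \in T')) ->
  cnt S T (l * d) = cnt S' T' d.
Proof.
move=> nl hS hT; rewrite !cnt_all (reindex_inj (mulfI nl)); apply: eq_bigr => v _ /=.
by rewrite -mulrBr hS hT.
Qed.

Lemma cnt_sum (S T : {set F}) : (\sum_d cnt S T d)%N = (#|S| * #|T|)%N.
Proof.
rewrite /cnt exchange_big /= -sum_nat_const; apply: eq_bigr => u _.
have hi : injective (fun d : F => u - d) by apply: (inv_inj (subKr u)).
rewrite (reindex_inj hi) /= -sum1_card [RHS]big_mkcond /=; apply: eq_bigr => d _.
by rewrite subKr; case: (d \in T).
Qed.

Lemma cnt_row (S : {set F}) d : (cnt S QF d + cnt S NF d + (d \in S))%N = #|S|.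
Proof.
rewrite /cnt -big_split /=.
have -> : nat_of_bool (d \in S) = (\sum_(u in S) nat_of_bool (u == d))%N.
  case: (boolP (d \in S)) => dS.
    rewrite (bigD1 d) //= eqxx big1 // => u /andP[_ /negbTE ->] //.
  rewrite big1 // => u uS; case: eqP => // ud; by move: dS; rewrite -ud uS.
rewrite -big_split -sum1_card /=; apply: eq_bigr => u _.
rewrite !inE -(subr_eq0 u d); case: (u - d == 0) => //=; by case: (sqF _).
Qed.
Lemma nz_cases d : d != 0 -> (d \in QF) || (d \in NF).
Proof. by rewrite !inE => ->; case: (sqF d). Qed.

Lemma QF_nz d : d \in QF -> d != 0.
Proof. by rewrite inE => /andP[]. Qed.
Lemma NF_nz d : d \in NF -> d != 0.
Proof. by rewrite inE => /andP[]. Qed.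

Lemma one_QF : (1 : F) \in QF.
Proof. by rewrite inE oner_eq0 /=; apply/existsP; exists 1; rewrite mulr1. Qed.

Lemma cnt_diag0 (S : {set F}) : cnt S S 0 = #|S|.
Proof. by rewrite /cnt -sum1_card; apply: eq_bigr => u uS; rewrite subr0 uS. Qed.

Lemma cnt_QN0 : cnt QF NF 0 = 0%N.
Proof. rewrite /cnt big1 // => u uQ; rewrite subr0; case: (boolP (u \in NF)) => // uN.
by case: (QN_disj _ uQ uN). Qed.
Lemma cnt_NQ0 : cnt NF QF 0 = 0%N.
Proof. rewrite /cnt big1 // => u uN; rewrite subr0; case: (boolP (u \in QF)) => // uQ.
by case: (QN_disj _ uQ uN). Qed.

Lemma sum_set_const (S : {set F}) c : (\sum_d (nat_of_bool (d \in S) * c))%N = (#|S| * c)%N.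
Proof.
rewrite -sum_nat_const [RHS]big_mkcond; apply: eq_bigr => d _.
by case: (d \in S); rewrite ?mul1n ?mul0n.
Qed.

Lemma m_def : (#|QF| * 2)%N = (p - 1)%N. Proof. exact: card_QF. Qed.

Lemma neg1_QF : (-1 : F) \in QF.
Proof.
have n1 : (-1 : F) != 0 by rewrite oppr_eq0 oner_eq0.
case/orP: (nz_cases _ n1) => // n1N.
set a := cnt QF QF 1.
have cd : forall d, cnt QF QF d = (nat_of_bool (d == 0%R) * #|QF| + nat_of_bool (d != 0%R) * a)%N.
  move=> d; case: (d =P 0) => [->|/eqP dn]; first by rewrite cnt_diag0 /= mul1n mul0n addn0.
  rewrite /= mul0n mul1n add0n -[d]mulr1.
  case/orP: (nz_cases _ dn) => dQ.
    by apply: cnt_scale => // v; rewrite mulQ_Q.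
  rewrite (@cnt_scale QF QF NF NF d 1 dn); last 2 first.
    by move=> v; rewrite mulN_Q. by move=> v; rewrite mulN_Q.
  rewrite [X in cnt NF NF X](_ : 1 = -1 * -1); last by rewrite mulrNN mulr1.
  rewrite (@cnt_scale NF NF QF QF (-1) (-1) n1); last 2 first.
    by move=> v; rewrite mulN_N. by move=> v; rewrite mulN_N.
  by rewrite cnt_sym opprK.
have := cnt_sum QF QF.
rewrite (eq_bigr _ (fun d _ => cd d)) big_split /=.
have -> : (\sum_(d : F) (nat_of_bool (d == 0%R) * #|QF|))%N = #|QF|.
  transitivity (#|[set (0%R:F)]| * #|QF|)%N; last by rewrite cards1 mul1n.
  rewrite -sum_set_const; apply: eq_bigr => d _; by rewrite inE.
have -> : (\sum_(d : F) (nat_of_bool (d != 0%R) * a))%N = ((p - 1) * a)%N.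
  rewrite -card_nz -sum_set_const; apply: eq_bigr => d _; by rewrite !inE.
move=> H.
have m0 : (0 < #|QF|)%N by have := m_def; have := p_gt2; lia.
have H2 : (#|QF| * (1 + 2 * a))%N = (#|QF| * #|QF|)%N.
  rewrite -m_def in H; rewrite -H; ring.
move: H2 => /eqP; rewrite eqn_pmul2l // => /eqP H3.
have := m_def; have := p4; lia.
Qed.
Lemma cntQ (S T : {set F}) d : d \in QF -> S \in [:: QF; NF] -> T \in [:: QF; NF] ->
  cnt S T d = cnt S T 1.
Proof.
move=> dQ hS hT; rewrite -[d]mulr1; apply: cnt_scale (QF_nz _ dQ) _ _ => v;
  [move: hS|move: hT]; rewrite !inE => /orP[] /eqP ->; by rewrite ?mulQ_Q ?mulQ_N.
Qed.

Lemma cntN_QQ d : d \in NF -> cnt QF QF d = cnt NF NF 1.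
Proof. move=> dN; rewrite -[d]mulr1; apply: cnt_scale (NF_nz _ dN) _ _ => v; by rewrite mulN_Q. Qed.
Lemma cntN_NN d : d \in NF -> cnt NF NF d = cnt QF QF 1.
Proof. move=> dN; rewrite -[d]mulr1; apply: cnt_scale (NF_nz _ dN) _ _ => v; by rewrite mulN_N. Qed.
Lemma cntN_QN d : d \in NF -> cnt QF NF d = cnt NF QF 1.
Proof. move=> dN; rewrite -[d]mulr1; apply: cnt_scale (NF_nz _ dN) _ _ => v; by rewrite ?mulN_N ?mulN_Q. Qed.
Lemma cntN_NQ d : d \in NF -> cnt NF QF d = cnt QF NF 1.
Proof. move=> dN; rewrite -[d]mulr1; apply: cnt_scale (NF_nz _ dN) _ _ => v; by rewrite ?mulN_N ?mulN_Q. Qed.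

Definition ee := cnt NF NF 1.

Lemma values : [/\ (ee * 2 = #|QF|)%N, (cnt QF QF 1).+1 = ee,
   cnt QF NF 1 = ee & cnt NF QF 1 = ee].
Proof.
set a := cnt QF QF 1; set b := cnt QF NF 1; set b' := cnt NF QF 1; rewrite /ee; set e := cnt NF NF 1.
have bb : b = b'.
  rewrite /b cnt_sym -[- 1]mulr1; apply: cnt_scale; first by rewrite oppr_eq0 oner_eq0.
    by move=> v; rewrite mulQ_N // neg1_QF.
  by move=> v; rewrite mulQ_Q // neg1_QF.
have r1 := cnt_row QF 1; rewrite one_QF -/a -/b in r1.
have r2 := cnt_row NF 1.
have n1N : ((1 : F) \in NF) = false by apply/negP => H; apply: (QN_disj _ one_QF H).
rewrite n1N in r2.
rewrite -/b' -/e in r2.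
have cN : #|NF| = #|QF| by have := card_QF; have := card_NF; lia.
have cd : forall d, cnt QF QF d = (nat_of_bool (d == 0%R) * #|QF| + nat_of_bool (d \in QF) * a
     + nat_of_bool (d \in NF) * e)%N.
  move=> d; case: (d =P 0) => [->|/eqP dn].
    rewrite cnt_diag0 /= mul1n; have -> : ((0:F) \in QF) = false by rewrite inE eqxx.
    have -> : ((0:F) \in NF) = false by rewrite inE eqxx.
    by rewrite /= !mul0n !addn0.
  rewrite /= mul0n add0n.
  case/orP: (nz_cases _ dn) => dQ.
    have -> : (d \in NF) = false by apply/negP => H; apply: (QN_disj _ dQ H).
    by rewrite dQ mul1n mul0n addn0 cntQ // !inE eqxx.
  have -> : (d \in QF) = false by apply/negP => H; apply: (QN_disj _ H dQ).
  by rewrite dQ mul1n mul0n add0n cntN_QQ.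
have := cnt_sum QF QF.
rewrite (eq_bigr _ (fun d _ => cd d)) !big_split /= !sum_set_const.
have -> : (\sum_(d : F) (nat_of_bool (d == 0%R) * #|QF|))%N = #|QF|.
  transitivity (#|[set (0%R:F)]| * #|QF|)%N; last by rewrite cards1 mul1n.
  rewrite -sum_set_const; apply: eq_bigr => d _; by rewrite inE.
rewrite cN => H.
have m0 : (0 < #|QF|)%N by have := m_def; have := p_gt2; lia.
have H2 : (#|QF| * (1 + a + e))%N = (#|QF| * #|QF|)%N by rewrite -H; ring.
move: H2 => /eqP; rewrite eqn_pmul2l // => /eqP H3.
rewrite cN in r2.
rewrite addn1 in r1; rewrite addn0 in r2. clear cd. clearbody a b b' e. subst b.
have r1' : (a + b').+1 = #|QF| := r1. have r2' : (b' + e)%N = #|QF| := r2. have H3' : (1 + a + e)%N = #|QF| := H3.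
clear r1 r2 H3 H. set m := #|QF| in r1' r2' H3' *. clearbody m. split; lia.
Qed.
Lemma cnt_cases (S T : {set F}) (c0 cq cn : nat) :
  cnt S T 0 = c0 -> (forall d, d \in QF -> cnt S T d = cq) -> (forall d, d \in NF -> cnt S T d = cn) ->
  forall d, cnt S T d = if d == 0 then c0 else if d \in QF then cq else cn.
Proof.
move=> h0 hq hn d; case: (d =P 0) => [->//|/eqP dn].
case/orP: (nz_cases _ dn) => dQ; first by rewrite dQ hq.
have -> : (d \in QF) = false by apply/negP => H; apply: (QN_disj _ H dQ).
exact: hn.
Qed.

Lemma ee_def : (ee * 4)%N = (p - 1)%N.
Proof. case: values => v1 _ _ _; have := card_QF; rewrite -v1; lia. Qed.

Lemma cntQQ d : cnt QF QF d = if d == 0 then (ee * 2)%N else if d \in QF then ee.-1 else ee.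
Proof.
case: values => v1 v2 v3 v4.
apply: cnt_cases => [|d' dQ|d' dN]; first by rewrite cnt_diag0 v1.
  by rewrite -v2 /= (cntQ _ _ _ dQ) // !inE eqxx ?orbT.
by rewrite cntN_QQ.
Qed.

Lemma cntNN d : cnt NF NF d = if d == 0 then (ee * 2)%N else if d \in QF then ee else ee.-1.
Proof.
case: values => v1 v2 v3 v4.
apply: cnt_cases => [|d' dQ|d' dN]; first by rewrite cnt_diag0; apply/eqP; rewrite -(eqn_pmul2r (_ : (0 < 2)%N)) // card_NF -ee_def -mulnA.
  by rewrite (cntQ _ _ _ dQ) // !inE eqxx ?orbT.
by rewrite (cntN_NN _ dN) -v2.
Qed.

Lemma cntQN d : cnt QF NF d = if d == 0 then 0%N else ee.
Proof.
case: values => v1 v2 v3 v4.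
rewrite (@cnt_cases _ _ 0 ee ee) //; first by case: (d == 0); case: (d \in QF).
  exact: cnt_QN0.
  by move=> d' dQ; rewrite (cntQ _ _ _ dQ) // !inE eqxx ?orbT.
by move=> d' dN; rewrite cntN_QN.
Qed.

Lemma cntNQ d : cnt NF QF d = if d == 0 then 0%N else ee.
Proof.
case: values => v1 v2 v3 v4.
rewrite (@cnt_cases _ _ 0 ee ee) //; first by case: (d == 0); case: (d \in QF).
  exact: cnt_NQ0.
  by move=> d' dQ; rewrite (cntQ _ _ _ dQ) // !inE eqxx ?orbT.
by move=> d' dN; rewrite cntN_NQ.
Qed.

End Fp.

Local Open Scope ring_scope.

Lemma valF (p : nat) (pr : prime p) n : val (n%:R : 'F_p) = (n %% p)%N.
Proof. by rewrite Zp_nat /= Fp_cast. Qed.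
Lemma natvalF (p : nat) (x : 'F_p) : (val x)%:R = x.
Proof. by rewrite natr_Zp. Qed.
Lemma valF_lt (p : nat) (pr : prime p) (x : 'F_p) : (val x < p)%N.
Proof. have := ltn_ord x; by rewrite [X in (_ < X)%N -> _]Fp_cast. Qed.

Lemma valZ_lt (p : nat) (pr : prime p) (x : 'Z_(2 * p)) : (val x < 2 * p)%N.
Proof. have := ltn_ord x; rewrite [X in (_ < X)%N -> _]Zp_cast //; have := prime_gt1 pr; lia. Qed.
Lemma valZ (p : nat) (pr : prime p) n : val (n%:R : 'Z_(2 * p)) = (n %% (2 * p))%N.
Proof. apply: val_Zp_nat; have := prime_gt1 pr; lia. Qed.
Definition rr (p : nat) (x : 'Z_(2 * p)) : 'F_p := (val x)%:R.
Arguments rr {p}.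

Lemma natvalZ (p : nat) (x : 'Z_(2 * p)) : (val x)%:R = x.
Proof. by rewrite natr_Zp. Qed.

Lemma Fnatmod (p : nat) (pr : prime p) n : ((n %% (2 * p))%N%:R : 'F_p) = n%:R.
Proof. apply: val_inj; rewrite /= !valF // modn_dvdm //; exact: dvdn_mull. Qed.

Lemma val_rr (p : nat) (pr : prime p) (x : 'Z_(2 * p)) : val (rr x) = (val x %% p)%N.
Proof. exact: valF. Qed.

Lemma rr_add (p : nat) (pr : prime p) (a b : 'Z_(2 * p)) : rr (a + b) = rr a + rr b.
Proof.
rewrite /rr; have -> : a + b = ((val a + val b)%N%:R : 'Z_(2 * p)) by rewrite natrD !natvalZ.
by rewrite valZ // Fnatmod // natrD.
Qed.

Lemma rr0 (p : nat) : rr (0 : 'Z_(2 * p)) = 0.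
Proof. by rewrite /rr. Qed.

Lemma rr_sub (p : nat) (pr : prime p) (a b : 'Z_(2 * p)) : rr (a - b) = rr a - rr b.
Proof. apply: (addIr (rr b)); by rewrite -rr_add // !subrK. Qed.

Lemma mod_split (p v w : nat) : (0 < p)%N -> (v < 2 * p)%N -> (w < p)%N ->
  (v %% p == w)%N = (v == w) || (v == w + p)%N.
Proof.
move=> p0 v2 wp; case: (ltnP v p) => h.
  rewrite modn_small //; lia.
have -> : v = ((v - p) + p)%N by lia.
rewrite modnDr modn_small; lia.
Qed.

Lemma eqF_nat (p : nat) (pr : prime p) m n : ((m%:R : 'F_p) == n%:R) = (m %% p == n %% p)%N.
Proof. by rewrite -val_eqE /= !valF. Qed.

Lemma qres_sqF (p : nat) (pr : prime p) s : qres p s = sqF p (s%:R).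
Proof.
apply/existsP/existsP => [[y /eqP hy]|[y /eqP hy]].
  exists (val y)%:R; by rewrite -natrM eqF_nat // hy.
have yp := valF_lt _ pr y.
exists (Ordinal yp) => /=; rewrite -eqF_nat // natrM natvalF hy //.
Qed.

Lemma rr_QF (p : nat) (pr : prime p) (x : 'Z_(2 * p)) :
  (rr x \in QF p) = (val x %% p != 0)%N && qres p (val x %% p).
Proof.
rewrite inE qres_sqF // Fp_nat_mod //; congr (_ && _).
by rewrite -val_eqE /= valF.
Qed.

Lemma rr_NF (p : nat) (pr : prime p) (x : 'Z_(2 * p)) :
  (rr x \in NF p) = (val x %% p != 0)%N && ~~ qres p (val x %% p).
Proof.
rewrite inE qres_sqF // Fp_nat_mod //; congr (_ && _).
by rewrite -val_eqE /= valF.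
Qed.

Lemma memA_gen (p : nat) (pr : prime p) (P : nat -> bool) (x : 'Z_(2 * p)) :
  (forall s, P s = P (s %% p)%N) ->
  (x \in [set x : 'Z_(2 * p) | [exists s : 'I_p,
     [&& (0 < s)%N, P s & (x == s%:R) || (x == (s + p)%:R)]]])
  = (val x %% p != 0)%N && P (val x %% p)%N.
Proof.
move=> HP; have p1 := prime_gt1 pr; have xl := valZ_lt _ pr x.
rewrite inE; apply/existsP/idP => [[s /and3P[s0 Ps /orP[]/eqP ->]]|/andP[nz Px]].
- rewrite valZ // (modn_small (_ : (s < 2 * p)%N)); last by have := ltn_ord s; lia.
  rewrite modn_small ?ltn_ord // -lt0n s0 //.
- rewrite valZ // (modn_small (_ : (s + p < 2 * p)%N)); last by have := ltn_ord s; lia.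
  rewrite modnDr modn_small ?ltn_ord // -lt0n s0 //.
- have sl : (val x %% p < p)%N by rewrite ltn_pmod //; lia.
  exists (Ordinal sl) => /=; rewrite lt0n nz Px /=.
  rewrite -!val_eqE /= !valZ // (modn_small (_ : (val x %% p < 2 * p)%N)); last lia.
  rewrite (modn_small (_ : (val x %% p + p < 2 * p)%N)); last lia.
  by rewrite -mod_split // ?eqxx //; lia.
Qed.

Lemma memA0 (p : nat) (pr : prime p) (x : 'Z_(2 * p)) : (x \in A0 p) = (rr x \in QF p).
Proof.
rewrite rr_QF //; apply: (etrans (memA_gen _ pr (qres p) x _)) => // s; rewrite /qres.
apply: eq_existsb => y; by rewrite modn_mod.
Qed.

Lemma memA1 (p : nat) (pr : prime p) (x : 'Z_(2 * p)) : (x \in A1 p) = (rr x \in NF p).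
Proof.
rewrite rr_NF //; apply: (etrans (memA_gen _ pr (fun s => ~~ qres p s) x _)) => // s; rewrite /qres.
congr (~~ _); apply: eq_existsb => y; by rewrite modn_mod.
Qed.

Lemma fiber_card (p : nat) (pr : prime p) (u : 'F_p) : #|[set a : 'Z_(2 * p) | rr a == u]| = 2%N.
Proof.
have p1 := prime_gt1 pr; have ul := valF_lt _ pr u.
have -> : [set a : 'Z_(2 * p) | rr a == u] = [set (val u)%:R; (val u + p)%:R].
  apply/setP => a; rewrite !inE -!val_eqE /= val_rr // !valZ //.
  rewrite (modn_small (_ : (val u < 2 * p)%N)); last lia.
  rewrite (modn_small (_ : (val u + p < 2 * p)%N)); last lia.
  apply: mod_split; [lia | exact: (valZ_lt _ pr a) | exact: ul].
rewrite cards2 -val_eqE /= !valZ // !modn_small; try lia.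
all: have ul' : (nat_of_ord u < p)%N := ul; lia.
Qed.

Lemma sum_fiber (p : nat) (pr : prime p) (G : 'F_p -> nat) :
  (\sum_(a : 'Z_(2 * p)) G (rr a) = 2 * \sum_(u : 'F_p) G u)%N.
Proof.
rewrite (partition_big rr xpredT) //= big_distrr; apply: eq_bigr => u _ /=.
rewrite (eq_bigr (fun _ => G u)); last by move=> a /eqP ->.
by rewrite sum_nat_cond_const fiber_card.
Qed.

Lemma count_pairs (G : finZmodType) (D1 D2 : {set G}) (P : pred (G * G)) (x : G) :
  count_mem x [seq y.1 - y.2 | y <- enum (setX D1 D2) & P y]
  = (\sum_(a : G) nat_of_bool ((a \in D1) && ((a - x)%R \in D2) && P (a, (a - x)%R)))%N.
Proof.
rewrite count_map count_filter -sum1_count big_enum_cond big_mkcond /=.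
transitivity (\sum_(a : G) \sum_(b : G) (if [&& (a, b) \in setX D1 D2, (a - b)%R == x & P (a, b)] then 1 else 0))%N.
  by rewrite pair_bigA; apply: eq_bigr => -[a b].
apply: eq_bigr => a _.
rewrite (bigD1 (a - x)%R) //= big1 ?addn0.
  rewrite !inE subKr eqxx /=; by case: (a \in D1); case: ((a - x)%R \in D2); case: (P _).
move=> b /negbTE nb; have -> : ((a - b)%R == x) = false.
  apply/negbTE; apply: contraFN nb => /eqP <-; by rewrite subKr.
by rewrite !andbF.
Qed.

Lemma count_Delta (G : finZmodType) (D : {set G}) (x : G) :
  count_mem x (Delta D) =
  (if x == 0%R then 0 else \sum_(a : G) nat_of_bool ((a \in D) && ((a - x)%R \in D)))%N.
Proof.
rewrite /Delta count_pairs /=; case: eqP => [->|/eqP nx].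
  by rewrite big1 // => a _; rewrite subr0 eqxx !andbF.
apply: eq_bigr => a _.
have -> : (a != a - x) by apply: contra nx => /eqP H; rewrite -(subKr a x) -H subrr.
by rewrite andbT.
Qed.

Lemma count_Delta2 (G : finZmodType) (D1 D2 : {set G}) (x : G) :
  count_mem x (Delta2 D1 D2) =
  (\sum_(a : G) nat_of_bool ((a \in D1) && ((a - x)%R \in D2)))%N.
Proof.
rewrite /Delta2 -[enum _]filter_predT count_pairs /=.
by apply: eq_bigr => a _; rewrite andbT.
Qed.

Lemma count_mscale (G : finZmodType) (l : nat) (X : {set G}) (x : G) :
  count_mem x (mscale l X) = (nat_of_bool (x \in X) * l)%N.
Proof.
rewrite /mscale count_flatten sumnE !big_map big_enum /=.
under eq_bigr => y _ do rewrite count_nseq /=.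
case: (boolP (x \in X)) => xX.
  rewrite (bigD1 x) //= eqxx big1 ?addn0 ?mul1n // => y /andP[_ /negbTE ny].
  by rewrite ny.
rewrite big1 // => y yX; case: eqP => // yx; by move: xX; rewrite -yx yX.
Qed.

Lemma cntZ (p : nat) (pr : prime p) (S T : {set 'F_p}) (D1 D2 : {set 'Z_(2 * p)})
  (h1 : forall a, (a \in D1) = (rr a \in S)) (h2 : forall a, (a \in D2) = (rr a \in T)) x :
  (\sum_(a : 'Z_(2 * p)) nat_of_bool ((a \in D1) && ((a - x)%R \in D2)))%N = (2 * cnt p S T (rr x))%N.
Proof.
rewrite cnt_all -sum_fiber //; apply: eq_bigr => a _.
by rewrite h1 h2 rr_sub.
Qed.

Lemma rrp (p : nat) (pr : prime p) : rr (p%:R : 'Z_(2 * p)) = 0.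
Proof.
have p1 := prime_gt1 pr.
apply/eqP; rewrite -val_eqE val_rr // valZ // (modn_small (_ : (p < 2 * p)%N)) ?modnn //; lia.
Qed.

Lemma pZnz (p : nat) (pr : prime p) : (p%:R : 'Z_(2 * p)) != 0.
Proof.
have p1 := prime_gt1 pr.
rewrite -val_eqE /= valZ // modn_small; lia.
Qed.

Lemma rr_zero (p : nat) (pr : prime p) (x : 'Z_(2 * p)) : x != 0 -> rr x = 0 -> x = p%:R.
Proof.
have p1 := prime_gt1 pr; have xl := valZ_lt _ pr x.
move=> nx /eqP; rewrite -val_eqE val_rr //= => /eqP h.
have : (val x %% p == 0)%N by rewrite h.
rewrite (mod_split p _ 0) //; try lia.
case/orP => /eqP hx.
  by move: nx; rewrite -val_eqE /= hx.
apply: val_inj; rewrite /= valZ // hx modn_small //; lia.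
Qed.

Lemma class_cases (p : nat) (pr : prime p) (p4 : (p %% 4 = 1)%N) (x : 'Z_(2 * p)) (K : Prop) :
  (x = 0 -> K) -> (x = p%:R -> K) ->
  (rr x \in QF p -> x != 0 -> x != p%:R -> K) ->
  (rr x \in NF p -> x != 0 -> x != p%:R -> K) -> K.
Proof.
move=> h0 hp hq hn.
case: (x =P 0) => [hx|/eqP nx]; first exact: h0 hx.
case: (rr x =P 0) => [/(rr_zero _ pr _ nx) hx |/eqP nr]; first exact: hp hx.
have npx : x != p%:R by apply: contra nr => /eqP ->; rewrite rrp.
case/orP: (nz_cases p _ nr) => h; [exact: hq h nx npx | exact: hn h nx npx].
Qed.

Lemma cardZ (p : nat) (pr : prime p) (S : {set 'F_p}) (D : {set 'Z_(2 * p)})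
  (h : forall a, (a \in D) = (rr a \in S)) : #|D| = (2 * #|S|)%N.
Proof.
rewrite -!sum1_card !big_mkcond /=.
rewrite (eq_bigr (fun a => nat_of_bool (rr a \in S))); last by move=> a _; rewrite h; case: (_ \in S).
rewrite (sum_fiber _ pr (fun u => nat_of_bool (u \in S))) [in RHS]big_mkcond; congr (2 * _)%N; apply: eq_bigr => u _; by case: (_ \in S).
Qed.

Lemma QF0 (p : nat) : ((0 : 'F_p) \in QF p) = false.
Proof. by rewrite inE eqxx. Qed.
Lemma NF0 (p : nat) : ((0 : 'F_p) \in NF p) = false.
Proof. by rewrite inE eqxx. Qed.
Lemma QFnotNF (p : nat) (u : 'F_p) : u \in QF p -> (u \in NF p) = false.
Proof. move=> h; apply/negP => h2; exact: (QN_disj _ _ h h2). Qed.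
Lemma NFnotQF (p : nat) (u : 'F_p) : u \in NF p -> (u \in QF p) = false.
Proof. move=> h; apply/negP => h2; exact: (QN_disj _ _ h2 h). Qed.

Lemma pdf (p : nat) (pr : prime p) (p4 : (p %% 4 = 1)%N) :
  pdf_family (2 * p) 2 (p - 1) [:: A0 p; A1 p].
Proof.
have p1 := prime_gt1 pr.
split => //.
- by rewrite card_ord Zp_cast //; lia.
- move=> i j hi hj nij.
  have dj : [disjoint A0 p & A1 p].
    rewrite disjoint_subset; apply/subsetP => y; rewrite memA0 // => h; rewrite inE /= memA1 // QFnotNF //.
  case: i hi nij => [|[|i]] //= _; case: j hj => [|[|j]] //= _ _.
  by rewrite disjoint_sym.
- move=> i; case: i => [|[|i]] //= _.
    by rewrite (cardZ _ pr (QF p)) => [|a]; [rewrite mulnC; exact: card_QF | exact: memA0].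
  by rewrite (cardZ _ pr (NF p)) => [|a]; [rewrite mulnC; exact: card_NF | exact: memA1].
- move=> i; case: i => [|[|i]] //= _.
    by rewrite memA0 // rr0 QF0.
  by rewrite memA1 // rr0 NF0.
Qed.

Local Close Scope ring_scope.

Theorem mainTheorem5 (p : nat) (hp : prime p) (hp4 : p %% 4 = 1) :
  [/\ perm_eq (Delta (A0 p))
        (mscale ((p - 5) %/ 2) (A0 p) ++ mscale ((p - 1) %/ 2) (A1 p)
         ++ nseq (p - 1) (p%:R : 'Z_(2 * p))%R),
      perm_eq (Delta (A1 p))
        (mscale ((p - 5) %/ 2) (A1 p) ++ mscale ((p - 1) %/ 2) (A0 p)
         ++ nseq (p - 1) (p%:R : 'Z_(2 * p))%R),
      is_DPDF (2 * p) 2 (p - 1) (p - 3) (2 * p - 2) [:: A0 p; A1 p] &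
      is_EPDF (2 * p) 2 (p - 1) (p - 1) 0 [:: A0 p; A1 p]].
Proof.
have p1 := prime_gt1 hp.
have e4 := ee_def p hp hp4.
have hA0 := memA0 p hp; have hA1 := memA1 p hp.
have cD0 : forall x, count_mem x (Delta (A0 p)) =
    if x == 0%R then 0 else 2 * cnt p (QF p) (QF p) (rr x).
  move=> x; rewrite count_Delta; case: (x == 0%R) => //; exact: cntZ.
have cD1 : forall x, count_mem x (Delta (A1 p)) =
    if x == 0%R then 0 else 2 * cnt p (NF p) (NF p) (rr x).
  move=> x; rewrite count_Delta; case: (x == 0%R) => //; exact: cntZ.
have cE01 : forall x, count_mem x (Delta2 (A0 p) (A1 p)) = 2 * cnt p (QF p) (NF p) (rr x).
  move=> x; rewrite count_Delta2; exact: cntZ.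
have cE10 : forall x, count_mem x (Delta2 (A1 p) (A0 p)) = 2 * cnt p (NF p) (QF p) (rr x).
  move=> x; rewrite count_Delta2; exact: cntZ.
have pnz := pZnz p hp.
split.
- apply/allP => x _ /=; apply/eqP; rewrite !count_cat !count_mscale count_nseq cD0 hA0 hA1.
  apply: (class_cases p hp hp4 x) => [->|->|h nx npx|h nx npx].
  + by rewrite eqxx rr0 QF0 NF0 /= (negbTE pnz).
  + rewrite (negbTE pnz) rrp // QF0 NF0 cntQQ // eqxx /= ?eqxx /=; lia.
  + rewrite (negbTE nx) h QFnotNF // cntQQ // (negbTE (QF_nz _ _ h)) h /= eq_sym (negbTE npx) /=; lia.
  + rewrite (negbTE nx) h NFnotQF // cntQQ // (negbTE (NF_nz _ _ h)) NFnotQF // /= eq_sym (negbTE npx) /=; lia.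
- apply/allP => x _ /=; apply/eqP; rewrite !count_cat !count_mscale count_nseq cD1 hA0 hA1.
  apply: (class_cases p hp hp4 x) => [->|->|h nx npx|h nx npx].
  + by rewrite eqxx rr0 QF0 NF0 /= (negbTE pnz).
  + rewrite (negbTE pnz) rrp // QF0 NF0 cntNN // eqxx /= ?eqxx /=; lia.
  + rewrite (negbTE nx) h QFnotNF // cntNN // (negbTE (QF_nz _ _ h)) h /= eq_sym (negbTE npx) /=; lia.
  + rewrite (negbTE nx) h NFnotQF // cntNN // (negbTE (NF_nz _ _ h)) NFnotQF // /= eq_sym (negbTE npx) /=; lia.
- split; first exact: pdf.
  move=> x; rewrite /unionF !big_cons big_nil /IntF /= !count_cat /= cD0 cD1 !in_setU in_set0 hA0 hA1.
  apply: (class_cases p hp hp4 x) => [->|->|h nx npx|h nx npx].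
  + by rewrite rr0 QF0 NF0 eqxx.
  + rewrite rrp // QF0 NF0 (negbTE pnz) cntQQ // cntNN // eqxx /=; split => //; lia.
  + rewrite h (negbTE nx) cntQQ // cntNN // (negbTE (QF_nz _ _ h)) h /=; split => //; lia.
  + rewrite h orbT (negbTE nx) cntQQ // cntNN // (negbTE (NF_nz _ _ h)) NFnotQF //= ; split => //; lia.
- split; first exact: pdf.
  move=> x; rewrite /unionF !big_cons big_nil /ExtF /= !count_cat /= cE01 cE10 !in_setU in_set0 hA0 hA1.
  apply: (class_cases p hp hp4 x) => [->|->|h nx npx|h nx npx].
  + by rewrite rr0 QF0 NF0 eqxx.
  + rewrite rrp // QF0 NF0 cntQN // cntNQ // eqxx /=; split => //; lia.
  + rewrite h cntQN // cntNQ // (negbTE (QF_nz _ _ h)) /=; split => //; lia.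
  + rewrite h orbT cntQN // cntNQ // (negbTE (NF_nz _ _ h)) /=; split => //; lia.
Qed.
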